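(* Let $T>0$, $0<\eta<T$ and $0<\alpha<\frac{1}{\eta}$. If $y\in C([0,T],[0,\infty))$, then the unique solution $u$ of the problem \[ u''(t)+y(t)=0,\quad t\in(0,T),\qquad u'(0)=0,\quad u(T)=\alpha\int_0^{\eta}u(s)\,ds \] satisfies $u(t)\ge 0$ for all $t\in[0,T]$. *)

(* Defs.v *)
From Stdlib Require Import Reals.
From Coquelicot Require Import Coquelicot.
Open Scope R_scope.

Definition cont_on_Icc (f : R -> R) (a b : R) : Prop :=
  forall t, a <= t <= b ->
    filterlim f (within (fun s => a <= s <= b) (locally t)) (locally (f t)).

Definition right_deriv (f : R -> R) (a l : R) : Prop :=
  filterlim (fun h => (f (a + h) - f a) / h) (at_right 0) (locally l).

(* u solves  u'' + y = 0 on (0,T),  u'(0) = 0,  u(T) = alpha * int_0^eta u,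
   with u in C([0,T]), twice differentiable on (0,T), du its derivative there,
   and u'(0) understood as the (one-sided) right derivative. *)
Definition is_solution (T eta alpha : R) (y u du : R -> R) : Prop :=
  cont_on_Icc u 0 T /\
  (forall t, 0 < t < T -> is_derive u t (du t)) /\
  (forall t, 0 < t < T -> is_derive du t (- y t)) /\
  right_deriv u 0 0 /\
  u T = alpha * RInt u 0 eta.

(* Main.v *)
Require Import Defs.
From Stdlib Require Import Reals Lra.
From Coquelicot Require Import Coquelicot.
Open Scope R_scope.

Lemma cont_eps (u : R -> R) T t : cont_on_Icc u 0 T -> 0 <= t <= T ->
  forall eps, 0 < eps -> exists delta, 0 < delta /\
    forall s, 0 <= s <= T -> Rabs (s - t) < delta -> Rabs (u s - u t) < eps.
Proof.
  intros H Ht eps He.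
  pose proof (proj1 (filterlim_locally _ _) (H t Ht) (mkposreal eps He)) as L.
  destruct L as [d Hd].
  exists d; split; [apply cond_pos|].
  intros s Hs Hst. apply (Hd s); auto.
Qed.

Lemma rderiv_eps (u : R -> R) : right_deriv u 0 0 ->
  forall eps, 0 < eps -> exists delta, 0 < delta /\
    forall h, 0 < h -> h < delta -> Rabs ((u (0 + h) - u 0) / h) < eps.
Proof.
  intros H eps He.
  pose proof (proj1 (filterlim_locally _ _) H (mkposreal eps He)) as L.
  destruct L as [d Hd].
  exists d; split; [apply cond_pos|].
  intros h Hh Hhd.
  assert (B := Hd h). simpl in B.
  unfold ball in B; simpl in B; unfold AbsRing_ball, abs, minus, plus, opp in B; simpl in B.
  replace ((u (0 + h) - u 0) / h) with ((u (0 + h) - u 0) / h + - 0) by ring.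
  apply B; auto.
  unfold ball; simpl; unfold AbsRing_ball, abs, minus, plus, opp; simpl.
  rewrite Rabs_right; lra.
Qed.

Lemma noninc (f df : R -> R) a b :
  (forall x, a < x < b -> is_derive f x (df x)) ->
  (forall x, a < x < b -> df x <= 0) ->
  forall s t, a < s -> s <= t -> t < b -> f t <= f s.
Proof.
  intros Hd Hn s t Hs Hst Ht.
  destruct (MVT_gen f s t df) as [c [Hc E]].
  - intros x Hx. rewrite Rmin_left in Hx by lra. rewrite Rmax_right in Hx by lra.
    apply Hd; lra.
  - intros x Hx. rewrite Rmin_left in Hx by lra. rewrite Rmax_right in Hx by lra.
    apply continuity_pt_filterlim. apply (ex_derive_continuous (K:=R_AbsRing) (V:=R_NormedModule)).
    exists (df x). apply Hd; lra.
  - rewrite Rmin_left in Hc by lra. rewrite Rmax_right in Hc by lra.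
    assert (df c <= 0) by (apply Hn; lra).
    assert (df c * (t - s) <= 0).
    { apply Rmult_le_0_r; lra. }
    lra.
Qed.

Theorem lemma2p2 (T eta alpha : R) (y u du : R -> R) :
  0 < T -> 0 < eta < T -> 0 < alpha < 1 / eta ->
  cont_on_Icc y 0 T -> (forall t, 0 <= t <= T -> 0 <= y t) ->
  is_solution T eta alpha y u du ->
  forall t, 0 <= t <= T -> 0 <= u t.
Proof.
  intros HT Heta Halpha Hy Hy0 [Hu [Hdu [Hddu [Hr HuT]]]].
  assert (Hdun : forall s t, 0 < s -> s <= t -> t < T -> du t <= du s).
  { apply (noninc du (fun x => - y x)); auto.
    intros x Hx. assert (0 <= y x) by (apply Hy0; lra). lra. }
  assert (Hdu0 : forall c, 0 < c < T -> du c <= 0).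
  { intros c Hc. destruct (Rle_or_lt (du c) 0) as [|Hd]; auto. exfalso.
    set (d := du c) in *.
    assert (Hg : forall s t, 0 < s -> s <= t -> t < c -> d * t - u t <= d * s - u s).
    { apply (noninc (fun x => d * x - u x) (fun x => d - du x)).
      - intros x Hx.
        assert (A : is_derive (fun x => d * x) x d).
        { auto_derive; [auto| ring]. }
        apply (is_derive_minus (fun x => d * x) u x d (du x) A).
        apply Hdu; lra.
      - intros x Hx. assert (du c <= du x) by (apply Hdun; lra). unfold d; lra. }
    destruct (rderiv_eps u Hr (d/2)) as [de [Hde Hde']]; [lra|].
    set (h := Rmin (c/2) (de/2)).
    assert (Hh1 : 0 < h) by (unfold h; apply Rmin_glb_lt; lra).
    assert (Hh2 : h <= c/2) by apply Rmin_l.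
    assert (Hh3 : h <= de/2) by apply Rmin_r.
    assert (Q := Hde' h Hh1 ltac:(lra)).
    rewrite Rplus_0_l in Q.
    assert (Q2 : u h - u 0 < d * h / 2).
    { apply Rabs_def2 in Q. destruct Q as [Q _].
      apply (Rmult_lt_compat_r h) in Q; auto.
      unfold Rdiv in Q. rewrite Rmult_assoc, Rinv_l in Q by lra. lra. }
    destruct (cont_eps u T 0 Hu ltac:(lra) (d * h / 4)) as [de2 [Hde2 Hde2']].
    { apply Rmult_lt_0_compat; [apply Rmult_lt_0_compat|]; lra. }
    set (h' := Rmin (h/4) (de2/2)).
    assert (Hh'1 : 0 < h') by (unfold h'; apply Rmin_glb_lt; lra).
    assert (Hh'2 : h' <= h/4) by apply Rmin_l.
    assert (Hh'3 : h' <= de2/2) by apply Rmin_r.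
    assert (Q3 := Hde2' h' ltac:(lra) ltac:(rewrite Rminus_0_r, Rabs_right; lra)).
    apply Rabs_def2 in Q3.
    assert (Q4 := Hg h' h Hh'1 ltac:(lra) ltac:(lra)).
    assert (d * h' <= d * (h / 4)) by (apply Rmult_le_compat_l; lra).
    lra. }
  assert (Hun : forall s t, 0 < s -> s <= t -> t < T -> u t <= u s).
  { apply (noninc u du); auto. }
  assert (HuTs : forall s, 0 < s < T -> u T <= u s).
  { intros s Hs. destruct (Rle_or_lt (u T) (u s)) as [|Hlt]; auto. exfalso.
    destruct (cont_eps u T T Hu ltac:(lra) (u T - u s)) as [de [Hde Hde']]; [lra|].
    set (t := Rmax s (T - de/2)).
    assert (s <= t) by apply Rmax_l.
    assert (T - de/2 <= t) by apply Rmax_r.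
    assert (t < T) by (unfold t; apply Rmax_lub_lt; lra).
    assert (Q := Hde' t ltac:(lra) ltac:(rewrite Rabs_left; lra)).
    apply Rabs_def2 in Q.
    assert (u t <= u s) by (apply Hun; lra). lra. }
  set (g := fun x => u (Rmax 0 (Rmin x T))).
  assert (Hgc : forall z, 0 <= z <= T -> continuous g z).
  { intros z Hz. apply (proj2 (filterlim_locally _ _)).
    intros eps.
    destruct (cont_eps u T z Hu Hz eps (cond_pos eps)) as [de [Hde Hde']].
    exists (mkposreal de Hde). intros x Hx.
    unfold ball in Hx; simpl in Hx; unfold AbsRing_ball, abs, minus, plus, opp in Hx; simpl in Hx.
    unfold ball; simpl; unfold AbsRing_ball, abs, minus, plus, opp; simpl.
    unfold g.
    assert (Ez : Rmax 0 (Rmin z T) = z).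
    { rewrite Rmin_left by lra. rewrite Rmax_right by lra. reflexivity. }
    rewrite Ez.
    apply Hde'.
    - split; [apply Rmax_l|]. apply Rmax_lub; [lra| apply Rmin_r].
    - unfold Rmax, Rmin; repeat destruct Rle_dec;
      apply Rabs_def2 in Hx; apply Rabs_def1; lra. }
  assert (Hint : RInt u 0 eta = RInt g 0 eta).
  { apply RInt_ext. intros x Hx.
    rewrite Rmin_left in Hx by lra. rewrite Rmax_right in Hx by lra.
    unfold g. rewrite Rmin_left by lra. rewrite Rmax_right by lra. reflexivity. }
  assert (Hle : RInt (fun _ => u T) 0 eta <= RInt g 0 eta).
  { apply RInt_le; [lra| apply ex_RInt_const| |].
    - apply (ex_RInt_continuous (V:=R_CompleteNormedModule)). intros z Hz.
      rewrite Rmin_left in Hz by lra. rewrite Rmax_right in Hz by lra.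
      apply Hgc; lra.
    - intros x Hx. unfold g. rewrite Rmin_left by lra. rewrite Rmax_right by lra.
      apply HuTs; lra. }
  rewrite RInt_const in Hle. unfold scal in Hle; simpl in Hle; unfold mult in Hle; simpl in Hle.
  assert (HuT0 : 0 <= u T).
  { rewrite Hint in HuT.
    assert (alpha * ((eta - 0) * u T) <= u T).
    { assert (alpha * ((eta - 0) * u T) <= alpha * RInt g 0 eta) by (apply Rmult_le_compat_l; lra). lra. }
    assert (alpha * eta < 1).
    { destruct Halpha as [_ Ha]. apply (Rmult_lt_compat_r eta) in Ha; [|lra].
      unfold Rdiv in Ha. rewrite Rmult_1_l, Rinv_l in Ha by lra. exact Ha. }
    destruct (Rle_or_lt 0 (u T)) as [|Hn]; auto.
    nra. }
  intros t Ht.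
  destruct (Req_dec t T) as [->|]; auto.
  destruct (Req_dec t 0) as [->|].
  -
    destruct (Rle_or_lt (u T) (u 0)) as [|Hlt]; [lra|]. exfalso.
    destruct (cont_eps u T 0 Hu ltac:(lra) (u T - u 0)) as [de [Hde Hde']]; [lra|].
    set (s := Rmin (T/2) (de/2)).
    assert (0 < s) by (unfold s; apply Rmin_glb_lt; lra).
    assert (s <= T/2) by apply Rmin_l. assert (s <= de/2) by apply Rmin_r.
    assert (Q := Hde' s ltac:(lra) ltac:(rewrite Rminus_0_r, Rabs_right; lra)).
    apply Rabs_def2 in Q.
    assert (u T <= u s) by (apply HuTs; lra). lra.
  - assert (u T <= u t) by (apply HuTs; lra). lra.
Qed.
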